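(* Let $\mathcal{F}$ be a complete pointed fan in $\mathbb{R}^2$ with $n\ge3$ regions and profile $\beta(\mathcal{F})=(\beta_0,\dots,\beta_{n-1})$. If $n$ is odd, then $\mathcal{F}$ is virtually inscribable and $\dim\mathrm{InSpc}(\mathcal{F})=1$. If $n$ is even, then $\mathcal{F}$ is virtually inscribable if and only if $\beta_0+\beta_2+\beta_4+\cdots+\beta_{n-2}=\pi$, and in this case $\dim\mathrm{InSpc}(\mathcal{F})=2$.
   Context: The regions $R_0,\dots,R_{n-1}$ of $\mathcal{F}$ are ordered counterclockwise, $\beta_i$ is the angle of $R_i$, and indices are taken modulo $n$. Adjacent regions $R_i,R_{i+1}$ share a ray; $s_{R_iR_{i+1}}$ is the reflection in the line spanned by that ray. For a walk $\mathcal{W}=R_{i_0}\cdots R_{i_k}$ in the cyclic adjacency graph set $t_{\mathcal{W}}=s_{R_{i_k}R_{i_{k-1}}}\cdots s_{R_{i_1}R_{i_0}}$. $\mathrm{InSpc}(\mathcal{F})$ denotes the based inscribed space $\{v\in\mathbb{R}^2: t_{\mathcal{W}}(v)=v$ for all closed walks $\mathcal{W}$ starting at $R_0\}$ (its dimension does not depend on the base region), and $\mathcal{F}$ is virtually inscribable if this space is nonzero. *)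

(* Defs.v *)
From HB Require Import structures.
From mathcomp Require Import all_boot all_order all_algebra.
From mathcomp Require Import all_classical all_reals.
From mathcomp Require Import trigo.
Set Implicit Arguments. Unset Strict Implicit. Unset Printing Implicit Defensive.
Import Order.TTheory GRing.Theory Num.Theory.
Local Open Scope ring_scope.

Section Fan.
Variable R : realType.

(* A complete pointed fan in R^2 with n regions R_0..R_{n-1} (ccw), given by
   the angle th0 of its first ray and its profile beta_0..beta_{n-1}.
   Ray k (k < n) has angle th0 + beta_0 + ... + beta_{k-1};
   region R_i is the cone between ray i and ray (i+1 mod n), of angle beta_i. *)
Definition is_complete_pointed_fan (n : nat) (beta : nat -> R) : Prop :=
  (forall i, (i < n)%N -> 0 < beta i < pi) /\ \sum_(i < n) beta i = 2 * pi.

Definition ray_angle (th0 : R) (beta : nat -> R) (k : nat) : R :=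
  th0 + \sum_(j < k) beta j.

Definition dir (phi : R) : 'rV[R]_2 :=
  \row_(i < 2) (if i == 0 :> nat then cos phi else sin phi).

(* reflection in the line spanned by the unit vector u, acting on row vectors:
   v *m refl u = 2 (v . u) u - v *)
Definition refl (u : 'rV[R]_2) : 'M[R]_2 := 2%:R *: (u^T *m u) - 1%:M.

Definition adj (n : nat) (a b : nat) : bool :=
  [&& (a < n)%N, (b < n)%N & (b == (a.+1 %% n)%N) || (a == (b.+1 %% n)%N)].

(* s_{R_a R_b}: reflection in the line spanned by the ray shared by R_a, R_b
   (for adjacent a, b and n >= 3) *)
Definition sref (n : nat) (th0 : R) (beta : nat -> R) (a b : nat) : 'M[R]_2 :=
  if b == (a.+1 %% n)%N then refl (dir (ray_angle th0 beta b))
  else refl (dir (ray_angle th0 beta a)).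

(* For the walk i_0 ... i_k, v *m walk_mx [:: i_0; ...; i_k] = t_W(v)
   = s_{i_k i_{k-1}} ( ... s_{i_1 i_0} (v)) *)
Fixpoint walk_mx (n : nat) (th0 : R) (beta : nat -> R) (w : seq nat) : 'M[R]_2 :=
  match w with
  | a :: ((b :: _) as w') => sref n th0 beta b a *m walk_mx n th0 beta w'
  | _ => 1%:M
  end.

(* 0 :: w is a closed walk starting (and ending) at R_0 *)
Definition closed_walk0 (n : nat) (w : seq nat) : bool :=
  path (adj n) 0%N w && (last 0%N w == 0%N).

Definition InSpc (n : nat) (th0 : R) (beta : nat -> R) (v : 'rV[R]_2) : Prop :=
  forall w, closed_walk0 n w -> v *m walk_mx n th0 beta (0%N :: w) = v.

Definition virtually_inscribable (n : nat) (th0 : R) (beta : nat -> R) : Prop :=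
  exists v : 'rV[R]_2, v != 0 /\ InSpc n th0 beta v.

Definition InSpc_dim (n : nat) (th0 : R) (beta : nat -> R) (d : nat) : Prop :=
  exists B : 'M[R]_(d, 2), row_free B /\
    forall v : 'rV[R]_2, InSpc n th0 beta v <-> (v <= B)%MS.

End Fan.

(* Main.v *)
Require Import Defs.
From HB Require Import structures.
From mathcomp Require Import all_boot all_order all_algebra.
From mathcomp Require Import all_classical all_reals.
From mathcomp Require Import trigo.
From mathcomp Require Import ring lra zify.
Import Order.TTheory GRing.Theory Num.Theory.
Local Open Scope ring_scope.
Set Implicit Arguments. Unset Strict Implicit.

Definition mref (R : realType) (t : R) : 'M[R]_2 :=
  \matrix_(i<2, j<2) if i == 0 :> nat then (if j == 0 :> nat then cos t else sin t)
                      else (if j == 0 :> nat then sin t else - cos t).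
Definition mrot (R : realType) (t : R) : 'M[R]_2 :=
  \matrix_(i<2, j<2) if i == 0 :> nat then (if j == 0 :> nat then cos t else sin t)
                      else (if j == 0 :> nat then - sin t else cos t).

Ltac mx2 := apply/matrixP => -[[|[|//]]] ? -[[|[|//]]] ?; rewrite !mxE ?big_ord_recr ?big_ord0 /= ?mxE /=.

Lemma mref_mref (R : realType) (a b : R) : mref a *m mref b = mrot (b - a).
Proof. mx2; rewrite ?mxE /= ?cosB ?sinB; ring. Qed.

Lemma mrot_mref (R : realType) (t a : R) : mrot t *m mref a = mref (a - t).
Proof. mx2; rewrite ?mxE /= ?cosB ?sinB; ring. Qed.

Lemma mrot0 (R : realType) (t : R) : cos t = 1 -> sin t = 0 -> mrot t = 1%:M.
Proof. move=> c s; mx2; rewrite ?c ?s //; ring. Qed.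

Lemma refl_dir (R : realType) (p : R) : refl (dir p) = mref (p *+ 2).
Proof. rewrite /refl /dir; mx2; rewrite ?mxE /= ?cos_mulr2n ?sin_mulr2n;
  try ring. by rewrite -expr2 sin2cos2; ring. Qed.

Definition rf (R : realType) (th0 : R) beta k := refl (dir (ray_angle th0 beta k)).
Definition Pm (R : realType) n (th0 : R) beta j := walk_mx n th0 beta (0%N :: iota 1 j).
Definition Lm (R : realType) n (th0 : R) beta := Pm n th0 beta n.-1 *m rf th0 beta 0.

Lemma walk_rcons (R : realType) n (th0 : R) beta x w b :
  walk_mx n th0 beta (x :: rcons w b) = walk_mx n th0 beta (x :: w) *m sref n th0 beta b (last x w).
Proof.
have wc : forall x y l, walk_mx n th0 beta (x :: y :: l) = sref n th0 beta y x *m walk_mx n th0 beta (y :: l) by [].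
elim: w x => [|y w IH] x; first by rewrite /= mulmx1 mul1mx.
by rewrite rcons_cons !wc IH mulmxA.
Qed.

Lemma last_iota m j : last m (iota m.+1 j) = (m + j)%N.
Proof. by elim: j m => [|j IH] m /=; rewrite ?addn0 // IH addnS. Qed.

Lemma iotaSr m j : iota m j.+1 = rcons (iota m j) (m + j)%N.
Proof. by rewrite -addn1 iotaD cats1. Qed.

Lemma Pm_succ (R : realType) n (th0 : R) beta j : (3 <= n)%N -> (j.+1 < n)%N ->
  Pm n th0 beta j.+1 = Pm n th0 beta j *m rf th0 beta j.+1.
Proof.
move=> n3 jn; rewrite /Pm iotaSr walk_rcons last_iota add0n add1n /sref.
case: eqP => [h|_] //; exfalso.
case: (ltnP j.+2 n) => hj; first by move: h; rewrite modn_small //; lia.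
have e : j.+2 = n by lia.
move: h; rewrite e modnn; lia.
Qed.

Lemma sref_bwd (R : realType) n (th0 : R) beta j : (j.+1 < n)%N ->
  sref n th0 beta j j.+1 = rf th0 beta j.+1.
Proof. by move=> jn; rewrite /sref modn_small // eqxx. Qed.

Lemma sref_fwd (R : realType) n (th0 : R) beta j : (3 <= n)%N -> (j.+1 < n)%N ->
  sref n th0 beta j.+1 j = rf th0 beta j.+1.
Proof.
move=> n3 jn; rewrite /sref; case: eqP => [h|_] //; exfalso.
case: (ltnP j.+2 n) => hj; first by move: h; rewrite modn_small //; lia.
have e : j.+2 = n by lia.
move: h; rewrite e modnn; lia.
Qed.

Lemma sref_wrap1 (R : realType) n (th0 : R) beta : (3 <= n)%N ->
  sref n th0 beta 0 n.-1 = rf th0 beta 0.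
Proof.
move=> n3; rewrite /sref modn_small; last by apply: leq_trans n3.
by case: n n3 => [|[|[|n]]].
Qed.

Lemma sref_wrap2 (R : realType) n (th0 : R) beta : (3 <= n)%N ->
  sref n th0 beta n.-1 0 = rf th0 beta 0.
Proof. by move=> n3; rewrite /sref prednK ?modnn //; apply: leq_trans n3. Qed.

Lemma rf_invol (R : realType) (th0 : R) beta k : rf th0 beta k *m rf th0 beta k = 1%:M.
Proof. by rewrite /rf refl_dir mref_mref subrr mrot0 ?cos0 ?sin0. Qed.

Lemma iota_path n k m : (m + k < n)%N -> path (adj n) m (iota m.+1 k).
Proof.
elim: k m => [|k IH] m h //=.
rewrite IH ?andbT; last by lia.
rewrite /adj modn_small; last by lia.
rewrite eqxx orTb andbT; apply/andP; split; lia.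
Qed.

Lemma Lm_walk (R : realType) n (th0 : R) beta : (3 <= n)%N ->
  closed_walk0 n (rcons (iota 1 n.-1) 0%N) /\
  walk_mx n th0 beta (0%N :: rcons (iota 1 n.-1) 0%N) = Lm n th0 beta.
Proof.
move=> n3; split.
  rewrite /closed_walk0 last_rcons eqxx andbT rcons_path iota_path; last by lia.
  rewrite last_iota add0n /adj prednK; last by lia.
  rewrite modnn eqxx leqnn /=; lia.
by rewrite walk_rcons last_iota add0n sref_wrap1.
Qed.

Lemma adj_step (R : realType) n (th0 : R) beta (v : 'rV[R]_2) x y : (3 <= n)%N ->
  v *m Lm n th0 beta = v -> adj n x y ->
  v *m Pm n th0 beta x *m sref n th0 beta y x = v *m Pm n th0 beta y.
Proof.
move=> n3 hL /and3P [xn yn /orP [/eqP hy | /eqP hx]].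
- case: (ltnP x.+1 n) => hx.
    by move: hy; rewrite modn_small // => ->; rewrite sref_fwd // Pm_succ // mulmxA.
  have ex : x = n.-1 by lia.
  move: hy; rewrite ex prednK ?modnn; last by lia.
  move=> ->; rewrite sref_wrap1 // -mulmxA -/(Lm n th0 beta) hL.
  by rewrite /Pm /= mulmx1.
- case: (ltnP y.+1 n) => hy.
    move: hx; rewrite modn_small // => ->.
    by rewrite sref_bwd // Pm_succ // !mulmxA -(mulmxA _ (rf _ _ _)) rf_invol mulmx1.
  have ey : y = n.-1 by lia.
  move: hx; rewrite ey prednK ?modnn; last by lia.
  move=> ->; rewrite sref_wrap2 //.
  rewrite -{1}hL /Lm /Pm [walk_mx _ _ _ [:: 0%N]]/= mulmx1 -!mulmxA rf_invol mulmx1.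
  by rewrite -/(Pm n th0 beta n.-1).
Qed.

Lemma InSpc_L (R : realType) n (th0 : R) beta (v : 'rV[R]_2) : (3 <= n)%N ->
  InSpc n th0 beta v <-> v *m Lm n th0 beta = v.
Proof.
move=> n3; split.
  by move=> h; have [cw e] := Lm_walk th0 beta n3; rewrite -e; apply: h.
move=> hL w /andP [hp /eqP hl].
have wc : forall x y l, walk_mx n th0 beta (x :: y :: l) = sref n th0 beta y x *m walk_mx n th0 beta (y :: l) by [].
have gen : forall w x, (x < n)%N -> path (adj n) x w ->
    v *m Pm n th0 beta x *m walk_mx n th0 beta (x :: w) = v *m Pm n th0 beta (last x w).
  elim => [|y w' IH] x xn; first by rewrite /= mulmx1.
  move=> /= /andP [a p]; rewrite mulmxA adj_step // IH //.
  by case/and3P: a.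
have := gen w 0%N _ hp; rewrite hl /Pm /= !mulmx1; apply; lia.
Qed.

Fixpoint Dseq (R : realType) (th0 : R) beta j : R :=
  match j with 0%N => 0 | j'.+1 => ray_angle th0 beta j'.+1 - Dseq th0 beta j' end.

Definition Esum (R : realType) (beta : nat -> R) j := \sum_(i < j | ~~ odd i) beta i.

Lemma ray_S (R : realType) (th0 : R) beta j :
  ray_angle th0 beta j.+1 = ray_angle th0 beta j + beta j.
Proof. by rewrite /ray_angle big_ord_recr addrA. Qed.

Lemma Esum_S (R : realType) (beta : nat -> R) j :
  Esum beta j.+1 = Esum beta j + (if odd j then 0 else beta j).
Proof. by rewrite /Esum [in LHS]big_mkcond [in RHS]big_mkcond big_ord_recr /=; case: (odd j). Qed.

Lemma Pm_formula (R : realType) n (th0 : R) beta j : (3 <= n)%N -> (j < n)%N ->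
  Pm n th0 beta j = if odd j then mref (Dseq th0 beta j *+ 2) else mrot (Dseq th0 beta j *+ 2).
Proof.
move=> n3; elim: j => [|j IH] jn.
  by rewrite /= mul0rn mrot0 ?cos0 ?sin0.
rewrite Pm_succ // IH; last by lia.
rewrite /rf refl_dir /= mulrnBl; case: (odd j) => /=.
  by rewrite mref_mref.
by rewrite mrot_mref.
Qed.

Lemma Dseq_val (R : realType) (th0 : R) beta j :
  Dseq th0 beta j = if odd j then ray_angle th0 beta 0 + Esum beta j.+1
                    else ray_angle th0 beta j - ray_angle th0 beta 0 - Esum beta j.
Proof.
elim: j => [|j IH]; first by rewrite /= /Esum big_ord0 subrr subr0.
rewrite /= IH; case hj: (odd j) => /=.
  ring.
rewrite !Esum_S /= ray_S hj /=; ring.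
Qed.

Lemma Lm_odd (R : realType) n (th0 : R) beta : (3 <= n)%N -> odd n ->
  Lm n th0 beta = refl (dir (ray_angle th0 beta 0 - Dseq th0 beta n.-1)).
Proof.
move=> n3 no; rewrite /Lm Pm_formula //; last by lia.
have -> : odd n.-1 = false by move: no; rewrite -(prednK (_ : (0 < n)%N)) //=; [case: (odd n.-1) | lia].
by rewrite /rf !refl_dir mrot_mref mulrnBl.
Qed.

Lemma Lm_even (R : realType) n (th0 : R) beta : (3 <= n)%N -> ~~ odd n ->
  Lm n th0 beta = mrot (- (Esum beta n *+ 2)).
Proof.
move=> n3 ne; rewrite /Lm Pm_formula //; last by lia.
have ho : odd n.-1 = true by move: ne; rewrite -(prednK (_ : (0 < n)%N)) //=; [case: (odd n.-1) | lia].
rewrite ho /rf refl_dir mref_mref Dseq_val ho prednK; last by lia.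
congr mrot; by rewrite /ray_angle big_ord0 !addr0 mulrnDl opprD addrA subrr add0r.
Qed.

Lemma dir_unit (R : realType) (p : R) : dir p *m (dir p)^T = 1%:M.
Proof.
apply/matrixP => i j; rewrite !ord1 !mxE !big_ord_recr big_ord0 /= !mxE /=.
by rewrite -!expr2 add0r cos2Dsin2.
Qed.

Lemma refl_fix (R : realType) (u v : 'rV[R]_2) : u *m u^T = 1%:M ->
  (v *m refl u = v <-> (v <= u)%MS).
Proof.
move=> hu.
have e : v *m refl u = 2%:R *: (v *m u^T *m u) - v.
  by rewrite /refl mulmxBr mulmx1 -scalemxAr mulmxA.
rewrite e; split.
  move=> h; apply/submxP; exists (v *m u^T).
  have : 2%:R *: (v *m u^T *m u - v) = 0.
    by rewrite scalerBr [2%:R *: v]scaler_nat mulr2n opprD addrA h subrr.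
  move/eqP; rewrite scaler_eq0 pnatr_eq0 /= subr_eq0 => /eqP ->. done.
move/submxP => [D ->].
by rewrite -!mulmxA [u *m (u^T *m u)]mulmxA hu mul1mx scaler_nat mulr2n addrK.
Qed.

Lemma rot_fix (R : realType) (v : 'rV[R]_2) t : v != 0 -> v *m mrot t = v -> cos t = 1.
Proof.
move=> vnz /matrixP h.
have h0 := h ord0 ord0; have h1 := h ord0 (lift ord0 ord0).
rewrite !mxE !big_ord_recl big_ord0 /= !mxE /= in h0 h1.
set a := v ord0 ord0 in h0 h1; set b := v ord0 (lift ord0 ord0) in h0 h1.
rewrite big_ord0 addr0 in h1; rewrite addr0 in h0.
case: (eqVneq (cos t) 1) => // c1; exfalso.
set K := (cos t - 1) ^+ 2 + sin t ^+ 2.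
have e1 : (cos t - 1) * a - sin t * b = 0.
  apply: (@etrans _ _ ((a * cos t + b * - sin t) - a)); first ring.
  by rewrite h0 subrr.
have e2 : sin t * a + (cos t - 1) * b = 0.
  apply: (@etrans _ _ ((a * sin t + b * cos t) - b)); first ring.
  by rewrite h1 subrr.
have Ka : K * a = 0.
  have -> : K * a = (cos t - 1) * ((cos t - 1) * a - sin t * b) + sin t * (sin t * a + (cos t - 1) * b) by rewrite /K; ring.
  by rewrite e1 e2 !mulr0 addr0.
have Kb : K * b = 0.
  have -> : K * b = - sin t * ((cos t - 1) * a - sin t * b) + (cos t - 1) * (sin t * a + (cos t - 1) * b) by rewrite /K; ring.
  by rewrite e1 e2 !mulr0 addr0.
have KE : K = 2%:R - 2%:R * cos t.
  rewrite /K (_ : (cos t - 1) ^+ 2 + sin t ^+ 2 = (cos t ^+ 2 + sin t ^+ 2) - 2%:R * cos t + 1); last by ring.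
  by rewrite cos2Dsin2; ring.
have Kn0 : K != 0.
  apply/eqP => K0; move/eqP: c1; apply; move: K0; rewrite KE; lra.
move/eqP: Ka; rewrite mulf_eq0 (negbTE Kn0) /= => /eqP a0.
move/eqP: Kb; rewrite mulf_eq0 (negbTE Kn0) /= => /eqP b0.
move/eqP: vnz; apply; apply/matrixP => i j; rewrite !ord1 mxE.
case: j => [[|[|//]]] ? /=; [rewrite -[RHS]a0 | rewrite -[RHS]b0]; congr (v _ _); exact: val_inj.
Qed.

Lemma sin0_pi (R : realType) (x : R) : 0 < x < pi *+ 2 -> sin x = 0 -> x = pi.
Proof.
move=> /andP [x0 x2] sx.
case: (ltgtP x pi) => // h.
  by have := @sin_gt0_pi R x; rewrite x0 h sx ltxx => /(_ isT).
have s2 : sin (x - pi) = 0.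
  by apply/eqP; rewrite -oppr_eq0 -sinDpi subrK sx.
have := @sin_gt0_pi R (x - pi); rewrite s2 ltxx subr_gt0 h /=.
move=> /(_ _) H; exfalso; apply: notF; apply: H.
by rewrite ltrBlDr -mulr2n.
Qed.

Lemma Esum_bounds (R : realType) n (beta : nat -> R) : (3 <= n)%N ->
  is_complete_pointed_fan n beta -> 0 < Esum beta n /\ Esum beta n < pi *+ 2.
Proof.
move=> n3 [hb hs].
have n0 : (0 < n)%N by lia.
have n1 : (1 < n)%N by lia.
have hsplit : \sum_(i < n) beta i = \sum_(i < n | odd i) beta i + Esum beta n.
  by rewrite (bigID (fun i : 'I_n => odd i)) /=.
have ge0 : forall P : pred 'I_n, 0 <= \sum_(i < n | P i) beta i.
  move=> P; apply: sumr_ge0 => i _; have /andP [h _] := hb i (ltn_ord i); exact: ltW.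
have pE : 0 < Esum beta n.
  rewrite /Esum (bigD1 (Ordinal n0)) //=.
  have := ge0 (fun i => ~~ odd i && (i != Ordinal n0)).
  have /andP [h _] := hb 0%N n0; lra.
have pO : 0 < \sum_(i < n | odd i) beta i.
  rewrite (bigD1 (Ordinal n1)) //=.
  have := ge0 (fun i => odd i && (i != Ordinal n1)).
  have /andP [h _] := hb 1%N n1; lra.
split => //; rewrite mulr2n; move: hs; rewrite hsplit; lra.
Qed.

Unset Implicit Arguments.
Set Strict Implicit.

Theorem proposition3p1 (R : realType) (n : nat) (th0 : R) (beta : nat -> R) :
  (3 <= n)%N -> is_complete_pointed_fan n beta ->
  ((odd n -> virtually_inscribable n th0 beta /\ InSpc_dim n th0 beta 1) /\
   (~~ odd n ->
      (virtually_inscribable n th0 beta <-> \sum_(i < n | ~~ odd i) beta i = pi) /\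
      (virtually_inscribable n th0 beta -> InSpc_dim n th0 beta 2))).
Proof.
move=> n3 hf; split.
- move=> no.
  set u := dir (ray_angle th0 beta 0 - Dseq th0 beta n.-1).
  have key : forall v, InSpc n th0 beta v <-> (v <= u)%MS.
    move=> v; apply: (iff_trans (InSpc_L th0 beta v n3)).
    rewrite Lm_odd //; exact: refl_fix (dir_unit _).
  have unz : u != 0.
    apply/eqP => u0; have := dir_unit (ray_angle th0 beta 0 - Dseq th0 beta n.-1).
    rewrite -/u u0 mul0mx => /matrixP /(_ 0 0); rewrite !mxE /= => /eqP.
    by rewrite eq_sym oner_eq0.
  split.
    by exists u; split => //; apply/key; exact: submx_refl.
  by exists u; split; [rewrite /row_free rank_rV unz | exact: key].
- move=> ne.
  have hL := Lm_even th0 beta n3 ne.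
  have [E0 E2] := Esum_bounds n3 hf.
  have L1 : Esum beta n = pi -> Lm n th0 beta = 1%:M.
    by move=> hE; rewrite hL hE mrot0 // ?cosN ?sinN ?cos2pi ?sin2pi ?oppr0.
  have iffE : virtually_inscribable n th0 beta <-> Esum beta n = pi.
    split.
    + move=> [v [vnz /(InSpc_L th0 beta v n3)]]; rewrite hL => /(rot_fix vnz).
      rewrite cosN cos_mulr2n mulr2n => hc.
      have hs : sin (Esum beta n) ^+ 2 = 0 by rewrite sin2cos2; lra.
      apply: sin0_pi; first by rewrite E0 E2.
      by move/eqP: hs; rewrite sqrf_eq0 => /eqP.
    + move=> hE; exists (const_mx 1); split.
        apply/eqP => /matrixP /(_ 0 0); rewrite !mxE => /eqP.
        by rewrite oner_eq0.
      by apply/(InSpc_L th0 beta _ n3); rewrite L1 // mulmx1.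
  split; first exact: iffE.
  move/iffE => hE; exists (1%:M : 'M_2); split; first by rewrite row_free_unit unitmx1.
  move=> v; split => _; first exact: submx1.
  by apply/(InSpc_L th0 beta _ n3); rewrite L1 // mulmx1.
Qed.
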